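(* Let $\langle E,\rightarrow\rangle$ be a computation and $b$ a regular predicate. For events $e,f$, $J_b(e)\subseteq J_b(f)$ if and only if there is a directed path from $e$ to $f$ in the graph $S_b(E)$.
   Context: A computation is a directed graph $\langle E, \rightarrow\rangle$ whose vertices (events) are partitioned among processes $p_1,\dots,p_n$; events on each process are totally ordered, each process $p_i$ has an initial event $\bot_i$ (first) and final event $\top_i$ (last), the path relation contains Lamport's happened-before relation (in particular there is a path from each event to its successor on the same process), all initial events lie in one strongly connected component and all final events in one strongly connected component. $\top$ is the set of final events and $\mathrm{succ}(e)$ the successor of $e$ on its process. A subset $C\subseteq E$ is a consistent cut if for every edge $(u,v)$, $v\in C$ implies $u\in C$. A predicate is regular if whenever consistent cuts $C_1,C_2$ satisfy it, so do $C_1\cap C_2$ and $C_1\cup C_2$ (trivial cuts $\emptyset,E$ treated as satisfying $b$). $J_b(e)$ is the least consistent cut of $\langle E,\rightarrow\rangle$ that satisfies $b$ and contains $e$, or $E$ if none exists or $e\in\top$. $F_b(e)$ is the vector whose $i$-th entry is the earliest event $g$ on $p_i$ with $J_b(e)\subseteq J_b(g)$. The graph $S_b(E)$ has vertex set $E$ and edges: from each $e\notin\top$ to $\mathrm{succ}(e)$, and from each event $e$ to $F_b(e)[i]$ for each process $p_i$. Each vertex has a (trivial) path to itself. *)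

(* Defs.v *)
From mathcomp Require Import all_boot.
Set Implicit Arguments.
Unset Strict Implicit.
Unset Printing Implicit Defensive.

Section Computation.
Variables (n : nat) (E : finType).
(* proc e : the process of e;  pos e : the position of e on its process
   (0 = initial event);  edge : the edge relation of the computation graph. *)
Variables (proc : E -> 'I_n) (pos : E -> nat) (edge : rel E).

Definition final (e : E) : bool :=
  [forall f, (proc f == proc e) ==> (pos f <= pos e)].

Definition is_succ (e f : E) : bool :=
  (proc f == proc e) && (pos f == (pos e).+1).

Definition is_computation : Prop :=
      (forall e f, proc e = proc f -> pos e = pos f -> e = f) /\
      (forall e k, k < pos e -> exists f, proc f = proc e /\ pos f = k) /\
      (forall i : 'I_n, exists e, proc e = i) /\
      (forall e f, is_succ e f -> connect edge e f) /\
      (forall e f, pos e = 0 -> pos f = 0 -> connect edge e f) /\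
      (forall e f, final e -> final f -> connect edge e f).

Definition consistent (C : {set E}) : bool :=
  [forall u, forall v, edge u v ==> (v \in C) ==> (u \in C)].

Variable b : {set E} -> bool.

(* b, with the trivial cuts treated as satisfying b *)
Definition satb (C : {set E}) : bool := [|| C == set0, C == setT | b C].

Definition regular : Prop :=
  forall C1 C2 : {set E}, consistent C1 -> consistent C2 ->
    satb C1 -> satb C2 -> satb (C1 :&: C2) /\ satb (C1 :|: C2).

Definition Jcand (e : E) (C : {set E}) : bool :=
  [&& consistent C, satb C & e \in C].

(* J_b(e): least consistent cut satisfying b containing e, or E if none
   exists or e is final *)
Definition J (e : E) : {set E} :=
  if final e then setT
  else match [pick C | Jcand e C && [forall D, Jcand e D ==> (C \subset D)]] with
       | Some C => C
       | None => setT
       end.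

(* F_b(e)[i]: earliest event g on p_i with J(e) \subset J(g)
   (None only if no such event exists, which does not happen) *)
Definition F (e : E) (i : 'I_n) : option E :=
  [pick g | [&& proc g == i, J e \subset J g &
     [forall h, ((proc h == i) && (J e \subset J h)) ==> (pos g <= pos h)]]].

Definition Sedge (e f : E) : bool :=
  (~~ final e && is_succ e f) || [exists i, F e i == Some f].

End Computation.

(* Main.v *)
Require Import Defs.
From mathcomp Require Import all_boot.

Lemma cons_connect (E : finType) (edge : rel E) (C : {set E}) u v :
  consistent edge C -> connect edge u v -> v \in C -> u \in C.
Proof.
move=> Hc /connectP [p Hp ->] {v}.
elim: p u Hp => [|w p IH] u //= /andP [Huw Hp] Hl.
have Hw := IH w Hp Hl.
by move/forallP: Hc => /(_ u) /forallP /(_ w); rewrite Huw Hw.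
Qed.

Lemma consI (E : finType) (edge : rel E) (C D : {set E}) :
  consistent edge C -> consistent edge D -> consistent edge (C :&: D).
Proof.
move=> /forallP HC /forallP HD; apply/forallP => u; apply/forallP => v.
apply/implyP => Huv; apply/implyP; rewrite !inE => /andP [Hv1 Hv2].
move/forallP: (HC u) => /(_ v); rewrite Huv Hv1 /= => ->.
by move/forallP: (HD u) => /(_ v); rewrite Huv Hv2.
Qed.

Lemma Jspec (n : nat) (E : finType) (proc : E -> 'I_n) (pos : E -> nat) (edge : rel E)
  (b : {set E} -> bool) e :
  regular edge b -> ~~ final proc pos e ->
  Jcand edge b e (J proc pos edge b e) /\
  forall D, Jcand edge b e D -> J proc pos edge b e \subset D.
Proof.
move=> Hreg nf; rewrite /J (negbTE nf).
case: pickP => [C /andP [HC /forallP HD] | Hnone].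
  by split => // D HDc; exact: (implyP (HD D) HDc).
exfalso.
have candT : Jcand edge b e setT.
  apply/and3P; split; last by rewrite in_setT.
    by apply/forallP => u; apply/forallP => v; rewrite !in_setT !implybT.
  by rewrite /satb eqxx orbT.
case: (arg_minnP (fun C : {set E} => #|C|) candT) => C HC Hmin.
have := Hnone C; rewrite HC /=.
suff -> : [forall D, Jcand edge b e D ==> (C \subset D)] by [].
apply/forallP => D; apply/implyP => HD.
move: HC HD => /and3P [c1 s1 e1] /and3P [c2 s2 e2].
have HI : Jcand edge b e (C :&: D).
  apply/and3P; split; first exact: consI.
    by case: (Hreg _ _ c1 c2 s1 s2).
  by rewrite inE e1 e2.
have := Hmin _ HI => Hle.
have /eqP Heq : C :&: D == C by rewrite eqEcard subsetIl Hle.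
by rewrite -Heq subsetIr.
Qed.

Theorem lemma7 (n : nat) (E : finType) (proc : E -> 'I_n) (pos : E -> nat) (edge : rel E)
  (b : {set E} -> bool) :
  is_computation proc pos edge -> regular edge b ->
  forall e f : E,
    (J proc pos edge b e \subset J proc pos edge b f) = connect (Sedge proc pos edge b) e f.
Proof.
move=> [Huniq [Hcont [Hproc [Hsucc [Hinit Hfin]]]]] Hreg e f.
set JJ := J proc pos edge b.
apply/idP/idP.
- move=> Hef.
  have chain : forall k x, proc x = proc f -> pos x <= pos f -> pos f - pos x = k ->
      connect (Sedge proc pos edge b) x f.
    elim=> [|k IH] x Hpx Hle Hk.
      have -> : x = f by apply: Huniq => //; apply/eqP; rewrite eqn_leq Hle /= -subn_eq0 Hk.
      exact: connect0.
    have Hlt : pos x < pos f by rewrite -subn_gt0 Hk.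
    have [y [Hpy Hposy]] : exists y, proc y = proc f /\ pos y = (pos x).+1.
      case: (ltngtP (pos x).+1 (pos f)) => H.
      - exact: Hcont.
      - by move: H; rewrite ltnNge Hlt.
      - by exists f.
    apply: connect_trans (IH y Hpy _ _).
    + apply: connect1; apply/orP; left; apply/andP; split.
        apply/negP => /forallP /(_ f) /implyP; rewrite Hpx eqxx => /(_ isT).
        by rewrite leqNgt Hlt.
      by rewrite /is_succ Hpy Hpx eqxx Hposy eqxx.
    + by rewrite Hposy.
    + by rewrite Hposy subnS Hk.
  have Hex : exists g, (proc g == proc f) && (JJ e \subset JJ g) by exists f; rewrite eqxx Hef.
  case: (ex_minnP (P := fun m => [exists g, [&& proc g == proc f, JJ e \subset JJ g & pos g == m]]) _).
    by exists (pos f); apply/existsP; exists f; rewrite eqxx Hef eqxx.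
  move=> m /existsP [g /and3P [Hg1 Hg2 /eqP Hg3]] Hmin.
  have HF : exists g', F proc pos edge b e (proc f) = Some g'.
    rewrite /F; case: pickP => [g' _ | Hn]; first by exists g'.
    exfalso; have := Hn g; rewrite Hg1 Hg2 /=.
    suff -> : [forall h, (proc h == proc f) && (JJ e \subset JJ h) ==> (pos g <= pos h)] by [].
    apply/forallP => h; apply/implyP => /andP [h1 h2]; rewrite Hg3; apply: Hmin.
    by apply/existsP; exists h; rewrite h1 h2 eqxx.
  case: HF => g' Hg'.
  move: (Hg'); rewrite /F; case: pickP => // g'' /and3P [p1 p2 /forallP p3] [Heq].
  subst g''.
  apply: connect_trans (connect1 _) (chain _ g' (eqP p1) _ erefl).
    by apply/orP; right; apply/existsP; exists (proc f); rewrite Hg'.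
  by move: (p3 f); rewrite eqxx Hef /=.
-
  have step : forall x y, Sedge proc pos edge b x y -> JJ x \subset JJ y.
    move=> x y /orP [/andP [nfx Hs] | /existsP [i /eqP Hi]].
      rewrite /JJ.
      case fy: (final proc pos y); first by rewrite /J fy subsetT.
      have [/and3P [c1 s1 e1] _] := @Jspec n E proc pos edge b y Hreg (negbT fy).
      have [_ Hm] := @Jspec n E proc pos edge b x Hreg nfx.
      apply: Hm; apply/and3P; split => //.
      exact: (@cons_connect _ _ _ _ _ c1 (Hsucc x y Hs) e1).
    move: Hi; rewrite /F; case: pickP => // g /and3P [_ H _] [<-]; exact: H.
  move=> /connectP [p Hp ->] {f}.
  elim: p e Hp => [|w p IH] x /=; first by rewrite subxx.
  move=> /andP [Hxw Hp]; exact: subset_trans (step _ _ Hxw) (IH _ Hp).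
Qed.
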